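(* (1) Let $M=2N-1$ and let $\mathcal F=\{f_1,\dots,f_M\}$ be a frame for $\mathbb R^N$. If $\mathbb M^{\mathcal F}$ is injective, then every $N$-element subset of $\mathcal F$ is linearly independent. (2) Let $N\ge 2$ and $M\ge 2N$. Then there exists an $M$-element frame $\mathcal F$ for $\mathbb R^N$ such that $\mathbb M^{\mathcal F}$ is injective but some $N$-element subset of $\mathcal F$ is linearly dependent.
   Context: A frame for $\mathbb R^N$ is a spanning family $\{f_1,\dots,f_M\}$ (indexed, repetitions allowed). $\mathbb M^{\mathcal F}:\mathbb R^N/\{\pm1\}\to\mathbb R^M$, $\hat x\mapsto(|\langle x,f_k\rangle|)_k$; injectivity means $|\langle x,f_k\rangle|=|\langle y,f_k\rangle|$ for all $k$ implies $y=\pm x$. *)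

(* Defs.v *)
From HB Require Import structures.
From mathcomp Require Import all_boot all_order all_algebra.
From mathcomp Require Import reals.
Set Implicit Arguments. Unset Strict Implicit. Unset Printing Implicit Defensive.
Import Order.TTheory GRing.Theory Num.Theory.
Local Open Scope ring_scope.

Definition dotv (R : realType) (N : nat) (x y : 'rV[R]_N) : R :=
  \sum_(i < N) x 0 i * y 0 i.

(* An indexed family F : 'I_M -> R^N (repetitions allowed) is a frame
   iff it spans R^N. *)
Definition is_frame (R : realType) (N M : nat) (F : 'I_M -> 'rV[R]_N) : Prop :=
  (\sum_(k < M) <<F k>> == 1%:M)%MS.

(* Injectivity of the phaseless map  x mod ±1 |-> (|<x, f_k>|)_k. *)
Definition phaseless_injective (R : realType) (N M : nat)
  (F : 'I_M -> 'rV[R]_N) : Prop :=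
  forall x y : 'rV[R]_N,
    (forall k : 'I_M, `|dotv x (F k)| = `|dotv y (F k)|) ->
    y = x \/ y = - x.

Definition lin_indep_on (R : realType) (N M : nat)
  (F : 'I_M -> 'rV[R]_N) (S : {set 'I_M}) : Prop :=
  forall c : 'I_M -> R, \sum_(i in S) c i *: F i = 0 ->
    forall i, i \in S -> c i = 0.

(* Main.v *)
Require Import Defs.
From HB Require Import structures.
From mathcomp Require Import all_boot all_order all_algebra.
From mathcomp Require Import reals.
From mathcomp Require Import lra zify.
Import Order.TTheory GRing.Theory Num.Theory.
Local Open Scope ring_scope.

Section Aux.
Variable R : realType.

Lemma dotvDl N (x y f : 'rV[R]_N) : dotv (x + y) f = dotv x f + dotv y f.
Proof. by rewrite /dotv -big_split /=; apply: eq_bigr => i _; rewrite mxE mulrDl. Qed.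

Lemma dotvNl N (x f : 'rV[R]_N) : dotv (- x) f = - dotv x f.
Proof. by rewrite /dotv -sumrN; apply: eq_bigr => i _; rewrite mxE mulNr. Qed.

Lemma kernel_nonzero m N (A : 'M[R]_(m, N)) : (\rank A < N)%N ->
  exists u : 'rV[R]_N, u != 0 /\ forall i, dotv u (row i A) = 0.
Proof.
move=> hr.
have hK : kermx A^T != 0.
  apply/negP => /eqP h0.
  have := mxrank_ker A^T; rewrite h0 mxrank0 mxrank_tr => h.
  move: hr; rewrite ltnNge => /negP; apply; rewrite leqNgt -subn_gt0 -h //.
have [i hi] : exists i, row i (kermx A^T) != 0.
  apply/existsP; move: hK; apply: contraR; rewrite negb_exists => /forallP h.
  apply/eqP/row_matrixP => i; rewrite row0; exact/eqP/negbNE/h.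
exists (row i (kermx A^T)); split=> // j.
have h := mulmx_ker A^T.
have := congr1 (fun w : 'M[R]_(N, m) => (row i w) 0 j) h.
rewrite row_mul row0 [X in _ = X -> _]mxE => <-.
by rewrite /dotv !mxE; apply: eq_bigr => l _; rewrite !mxE.
Qed.

Lemma orth N M (F : 'I_M -> 'rV[R]_N) (T : {set 'I_M}) :
  (\rank (\matrix_(i < #|T|) F (enum_val i)) < N)%N ->
  exists u : 'rV[R]_N, u != 0 /\ forall k, k \in T -> dotv u (F k) = 0.
Proof.
move=> /kernel_nonzero [u [hu h]]; exists u; split=> // k kT.
by have := h (enum_rank_in kT k); rewrite rowK enum_rankK_in.
Qed.

End Aux.
Arguments orth {R N M F T} _.

Lemma part1 (R : realType) (N : nat) (F : 'I_(2 * N - 1) -> 'rV[R]_N) :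
  phaseless_injective F ->
  forall S : {set 'I_(2 * N - 1)}, #|S| = N -> lin_indep_on F S.
Proof.
move=> hinj S hS c hc i0 i0S.
case: (eqVneq (c i0) 0) => // hc0; exfalso.
set A := \matrix_(i < #|S|) F (enum_val i).
have hrA : (\rank A < N)%N.
  rewrite -[X in (_ < X)%N]hS ltn_neqAle rank_leq_row andbT.
  apply/negP => /eqP hfree.
  have hrf : row_free A by rewrite /row_free hfree.
  set w := \row_(i < #|S|) c (enum_val i).
  have hw : w *m A = 0.
    rewrite mulmx_sum_row -[RHS]hc (big_enum_val (fun k => c k *: F k)) /=.
    by apply: eq_bigr => i _; rewrite rowK mxE.
  move: hw => /eqP; rewrite mulmx_free_eq0 // => /eqP /rowP /(_ (enum_rank_in i0S i0)).
  by rewrite !mxE enum_rankK_in //; apply/eqP.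
have [u [hu0 hu]] := orth hrA.
have hN : (0 < N)%N by rewrite -[X in (_ < X)%N]hS; apply/card_gt0P; exists i0.
have hrB : (\rank (\matrix_(i < #|~: S|) F (enum_val i)) < N)%N.
  apply: leq_ltn_trans (rank_leq_row _) _.
  have := cardsC S; rewrite card_ord hS => h.
  move: h hN; set a := #|~: S|; move=> h hN; lia.
have [v [hv0 hv]] := orth hrB.
have := hinj (u + v) (u - v).
case.
  move=> k; case: (boolP (k \in S)) => kS.
    by rewrite !dotvDl dotvNl hu // !add0r normrN.
  by rewrite !dotvDl dotvNl (hv k) ?inE ?kS // oppr0 !addr0.
  move=> h; move/eqP: hv0; apply; apply/rowP => j.
  have := congr1 (fun w : 'rV_N => w 0 j) h; rewrite /= !mxE; lra.
move=> h; move/eqP: hu0; apply; apply/rowP => j.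
have := congr1 (fun w : 'rV_N => w 0 j) h; rewrite /= !mxE; lra.
Qed.

Section Part2.
Variables (R : realType) (N M : nat).
Hypotheses (hN : (2 <= N)%N) (hM : (2 * N <= M)%N).

Definition tt (k : 'I_M) : R := ((val k).-1)%:R.
Definition FF (k : 'I_M) : 'rV[R]_N := \row_(j < N) tt k ^+ j.

Definition cx (x : 'rV[R]_N) (j : nat) : R := if insub j is Some i then x 0 i else 0.

Lemma dotFF x k : dotv x (FF k) = (\poly_(j < N) cx x j).[tt k].
Proof. by rewrite horner_poly /dotv; apply: eq_bigr => j _; rewrite mxE /cx valK. Qed.

Lemma zero_of_roots (T : {set 'I_M}) (x : 'rV[R]_N) :
  {in T &, injective tt} -> (N <= #|T|)%N ->
  (forall k, k \in T -> dotv x (FF k) = 0) -> x = 0.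
Proof.
move=> hinj hT hx.
case: (eqVneq (\poly_(j < N) cx x j) 0) => hp.
  apply/rowP => j; have := congr1 (fun p : {poly R} => p`_j) hp.
  by rewrite coef_poly ltn_ord coef0 mxE /cx valK.
have := max_poly_roots hp (rs := [seq tt k | k <- enum T]).
rewrite size_map -cardE map_inj_in_uniq ?enum_uniq; last first.
  by move=> a b; rewrite !mem_enum; apply: hinj.
have -> : all (root (\poly_(j < N) cx x j)) [seq tt k | k <- enum T].
  apply/allP => r /mapP [k]; rewrite mem_enum => kT ->.
  by rewrite /root -dotFF hx.
move=> /(_ isT isT) h; have := size_poly N (cx x); move=> h2.
by have := leq_trans (leq_ltn_trans hT h) h2; rewrite ltnn.
Qed.

Lemma M0 : (0 < M)%N. Proof. lia. Qed.
Lemma M1 : (1 < M)%N. Proof. lia. Qed.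
Definition i0 : 'I_M := Ordinal M0.
Definition i1 : 'I_M := Ordinal M1.

Definition red (T : {set 'I_M}) := if i1 \in T then T :\ i0 else T.

Lemma red_inj (T : {set 'I_M}) : {in red T &, injective tt}.
Proof.
move=> a b; rewrite /red /tt; case: ifP => h1.
  rewrite !inE => /andP [ha _] /andP [hb _] /eqP; rewrite eqr_nat => /eqP hab.
  apply: val_inj; have ha' : val a != 0%N by apply: contra ha => /eqP ?; apply/eqP/val_inj.
  have hb' : val b != 0%N by apply: contra hb => /eqP ?; apply/eqP/val_inj.
  move: ha' hb' hab; rewrite -!subn1; move: (val a) (val b) => p q; lia.
move=> ha hb /eqP; rewrite eqr_nat => /eqP hab; apply: val_inj.
have ha' : val a != 1%N by apply: contraFN h1 => /eqP h; have -> : i1 = a by apply: val_inj. 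
have hb' : val b != 1%N by apply: contraFN h1 => /eqP h; have -> : i1 = b by apply: val_inj.
move: ha' hb' hab; rewrite -!subn1; move: (val a) (val b) => p q; lia.
Qed.

Lemma red_card (T : {set 'I_M}) : (#|T| <= #|red T| + ((i0 \in T) && (i1 \in T)))%N.
Proof.
rewrite /red; case: ifP => h1; last by rewrite andbF addn0.
by rewrite andbT [X in (X <= _)%N](cardsD1 i0 T) addnC.
Qed.

Lemma red_sub (T : {set 'I_M}) : {subset red T <= T}.
Proof. by move=> k; rewrite /red; case: ifP => // _; rewrite inE => /andP []. Qed.

Lemma FF_inj : phaseless_injective FF.
Proof.
move=> x y h.
set S := [set k | dotv x (FF k) == dotv y (FF k)].
have h1 : forall k, k \in S -> dotv (x - y) (FF k) = 0.
  by move=> k; rewrite inE dotvDl dotvNl => /eqP ->; rewrite subrr.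
have h2 : forall k, k \in ~: S -> dotv (x + y) (FF k) = 0.
  move=> k; rewrite !inE dotvDl => hk; have := h k => /eqP; rewrite eqr_norm2.
  by rewrite (negbTE hk) /= => /eqP ->; rewrite addNr.
have hc := cardsC S; rewrite card_ord in hc.
have r1 := red_card S; have r2 := red_card (~: S).
have hb : (((i0 \in S) && (i1 \in S)) + ((i0 \in ~: S) && (i1 \in ~: S)) <= 1)%N.
  by rewrite !in_setC; case: (i0 \in S); case: (i1 \in S).
have [hS|hS] : (N <= #|red S|)%N \/ (N <= #|red (~: S)|)%N.
  move: hb r1 r2 hc hM.
  case: ((i0 \in S) && (i1 \in S)); case: ((i0 \in ~: S) && (i1 \in ~: S));
  move: #|red S| #|red (~: S)| #|S| #|~: S| => a b c d /= *; lia.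
  left; apply/esym/subr0_eq; apply: (@zero_of_roots (red S) (x - y) (red_inj S) hS).
  by move=> k /red_sub; apply: h1.
right; apply/eqP; rewrite -addr_eq0 addrC; apply/eqP.
apply: (@zero_of_roots (red (~: S)) (x + y) (red_inj (~: S)) hS).
by move=> k /red_sub; apply: h2.
Qed.

Lemma FF_frame : is_frame FF.
Proof.
set B := \matrix_(k < M) FF k.
have hB : row_full B.
  suff : row_free B^T by rewrite /row_free mxrank_tr.
  rewrite -kermx_eq0.
  apply/eqP/row_matrixP => i; rewrite row0.
  apply: (@zero_of_roots (red setT) _ (red_inj _)).
    have := red_card setT; rewrite cardsT card_ord.
    move: #|red setT| => a; case: (_ && _) => /= *; lia.
  move=> k _.
  have := congr1 (fun w : 'M[R]_(N, M) => (row i w) 0 k) (mulmx_ker B^T).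
  rewrite row_mul row0 [X in _ = X -> _]mxE => <-.
  by rewrite /dotv !mxE; apply: eq_bigr => l _; rewrite !mxE.
apply/andP; split; first exact: submx1.
apply: submx_trans (_ : (B <= _)%MS); first by rewrite sub1mx.
apply/row_subP => k; rewrite rowK; apply: (sumsmx_sup k) => //; by rewrite genmxE.
Qed.

Lemma NM : (N <= M)%N. Proof. lia. Qed.
Lemma N0 : (0 < N)%N. Proof. lia. Qed.
Lemma N1 : (1 < N)%N. Proof. lia. Qed.

Lemma FF_dep : exists S : {set 'I_M}, #|S| = N /\ ~ lin_indep_on FF S.
Proof.
exists [set widen_ord NM i | i : 'I_N]; split.
  rewrite card_imset ?card_ord // => a b /(congr1 val) /= h; exact: val_inj.
have h0 : i0 \in [set widen_ord NM i | i : 'I_N].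
  by apply/imsetP; exists (Ordinal N0) => //; apply: val_inj.
have h1 : i1 \in [set widen_ord NM i | i : 'I_N].
  by apply/imsetP; exists (Ordinal N1) => //; apply: val_inj.
have h01 : i0 != i1 by [].
set c := (fun k : 'I_M => if k == i0 then 1 else if k == i1 then -1 else (0:R)).
move=> /(_ c) h.
suff hs : \sum_(i in [set widen_ord NM i | i : 'I_N]) c i *: FF i = 0.
  by have := h hs i0 h0; rewrite /c eqxx => /eqP; rewrite oner_eq0.
rewrite (bigD1 i0) //= (bigD1 i1) /=; last by rewrite h1 andbT.
rewrite /c eqxx (negbTE (h01 : i1 != i0)) ?eqxx big1; last first.
  by move=> k /andP [/andP [_ /negbTE ->] /negbTE ->]; rewrite scale0r.
have -> : FF i1 = FF i0 by apply/rowP => j; rewrite !mxE.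
by rewrite addr0 scale1r scaleN1r subrr.
Qed.

End Part2.

Lemma part2 (R : realType) (N M : nat) : (2 <= N)%N -> (2 * N <= M)%N ->
     exists F : 'I_M -> 'rV[R]_N,
       [/\ is_frame F, phaseless_injective F &
           exists S : {set 'I_M}, #|S| = N /\ ~ lin_indep_on F S].
Proof.
move=> hN hM; exists (@FF R N M); split.
- exact: FF_frame.
- exact: FF_inj.
- exact: FF_dep.
Qed.

Theorem corollary2p7 (R : realType) :
  (forall (N : nat) (F : 'I_(2 * N - 1) -> 'rV[R]_N),
     is_frame F -> phaseless_injective F ->
     forall S : {set 'I_(2 * N - 1)}, #|S| = N -> lin_indep_on F S)
  /\
  (forall N M : nat, (2 <= N)%N -> (2 * N <= M)%N ->
     exists F : 'I_M -> 'rV[R]_N,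
       [/\ is_frame F, phaseless_injective F &
           exists S : {set 'I_M}, #|S| = N /\ ~ lin_indep_on F S]).
Proof.
split.
- by move=> N F _ hinj; apply: part1.
- by move=> N M; apply: part2.
Qed.
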